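(* The local monodromy $\rho_{\mathrm{trc}}$ (around $t=27/5$) acting on $\mathrm{Hom}_{\mathbb Z\mathcal I}(V_o,H_1(\Sigma;\mathbb Z))$ fixes $U_{\mathrm{trc}}$ and sends $U_{\mathrm{edge}}$ to $U_{\mathrm{edge}}+U_{\mathrm{trc}}$; the local monodromy $\rho_{\mathrm{edge}}$ (around $t=\infty$) fixes $U_{\mathrm{edge}}$ and sends $U_{\mathrm{trc}}$ to $U_{\mathrm{trc}}-3U_{\mathrm{edge}}$.
   Context: Setup: $D\subset\mathbb R^3$ regular dodecahedron centered at $0$, $\mathcal I\subset\mathrm{SO}(3)$ its rotation group ($\cong A_5$), $\iota=-\mathrm{id}$. $\mathcal K$ = the five inscribed cubes ($\mathcal I$ acts as even permutations), $V_o:=\mathbb Z^{\mathcal K}/\mathbb Z(\sum e)$, $\bar e$ the image of $e$. $\hat\Sigma$: surface $D$ with an $\mathcal I$- and $\iota$-invariant small open equilateral triangle removed at each vertex; $\Sigma$: $\hat\Sigma$ with boundary points $p\sim\iota p$ identified (closed oriented genus-10 surface with edge-type and truncation-type $1$-cells). $\delta_x$ (vertex $x$): counterclockwise boundary of the removed triangle at $x$; $\delta_y$ (oriented edge $y$, initial point $in(y)$): loop formed by edge-type cells $y$ and $\iota y$. $\Delta_{\mathrm{trc}}=\{\delta_x\}$, $\Delta_{\mathrm{edge}}=\{\delta_y\}$. For fixed $e\in\mathcal K$, $E$ is one of the two 4-element sets of pairwise non-adjacent vertices of $e$; $u_{\mathrm{trc}},u_{\mathrm{edge}}:V_o\to Z_1(\Sigma)$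 are the $\mathbb Z\mathcal I$-maps with $u_{\mathrm{trc}}(\bar e)=\sum_{x\in E}\delta_x$, $u_{\mathrm{edge}}(\bar e)=\sum_{x\in E}\sum_{in(y)=x}\delta_y$; $U_{\mathrm{trc}}$ is the class of $u_{\mathrm{trc}}$ and $U_{\mathrm{edge}}$ one third of the class of $u_{\mathrm{edge}}$ in $\mathrm{Hom}_{\mathbb Z\mathcal I}(V_o,H_1(\Sigma;\mathbb Z))$ (these form a $\mathbb Z$-basis). Winger pencil: the pencil of $\mathcal I$-invariant plane sextics, base $\mathcal B\cong\mathbb P^1$ with coordinate $t$, with singular members $C_0$ (triple conic), $C_\infty$ (six lines), $C_{27/5}$ (irreducible, ten nodes), $C_{-1}$ (irreducible, six nodes), other members smooth of genus 10. For $\tau\in(0,1)$, the piecewise Euclidean metric on $\hat\Sigma$ with edge-type edges of length $\tau$ and truncation-type edges of length $1-\tau$ induces an $\mathcal I$-invariant complex structure on $\Sigma$ making it isomorphic (as $\mathcal I$-curve) to $C_{\gamma(\tau)}$ with $\gamma(\tau)$ real in $(27/5,\infty)$; as $\tau\to0$ the family degenerates to $C_\infty$ with vanishing cycles $\Delta_{\mathrm{edge}}$, and as $\tau\to1$ to $C_{27/5}$ with vanishing cycles $\Delta_{\mathrm{trc}}$. Using this to identify $H_1(\Sigma)$ with $H_1(C_t)$ for $t$ on this real interval, $\rho_{\mathrm{edge}}$ and $\rho_{\mathrm{trc}}$ are the monodromies along small loops around $\infty$ resp. $27/5$, given by the Picard–Lefschetz formula $h\mapsto h+\sum_{\delta\in\Delta/\{\pm1\}}\langle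 h,\delta\rangle\delta$ with $\Delta=\Delta_{\mathrm{edge}}$ resp. $\Delta_{\mathrm{trc}}$; they act on $\mathrm{Hom}_{\mathbb Z\mathcal I}(V_o,H_1(\Sigma;\mathbb Z))$ by composition. *)

(* Defs.v *)
From mathcomp Require Import all_boot all_order all_algebra.
Set Implicit Arguments.
Unset Strict Implicit.
Unset Printing Implicit Defensive.
Import GRing.Theory Num.Theory.
Local Open Scope ring_scope.

(* Vertices are numbered 0..19; the numbering comes
   from the coordinates (p = golden ratio, q = 1/p)
     0:( 1, 1, 1)  1:( 1, 1,-1)  2:( 1,-1, 1)  3:( 1,-1,-1)
     4:(-1, 1, 1)  5:(-1, 1,-1)  6:(-1,-1, 1)  7:(-1,-1,-1)
     8:(0,q,p) 9:(q,p,0) 10:(p,0,q) 11:(0,q,-p) 12:(q,-p,0) 13:(p,0,-q)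
    14:(0,-q,p) 15:(-q,p,0) 16:(-p,0,q) 17:(0,-q,-p) 18:(-q,-p,0)
    19:(-p,0,-q).
   Each face is listed as the cyclic sequence of its vertices in
   counterclockwise order as seen from outside D (outward normal). *)
Definition V := 'I_20.

Definition face_list : seq (seq nat) :=
  [:: [:: 0; 8; 14; 2; 10]; [:: 0; 9; 15; 4; 8]; [:: 0; 10; 13; 1; 9];
      [:: 1; 11; 5; 15; 9]; [:: 1; 13; 3; 17; 11]; [:: 2; 12; 3; 13; 10];
      [:: 2; 14; 6; 18; 12]; [:: 3; 12; 18; 7; 17]; [:: 4; 15; 5; 19; 16];
      [:: 4; 16; 6; 14; 8]; [:: 5; 11; 17; 7; 19]; [:: 6; 16; 19; 7; 18]].

Definition Face := 'I_12.

Definition fv (i : Face) (k : nat) : V := inord (nth 0%N (nth [::] face_list i) (k %% 5)).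

Definition face_set (i : Face) : {set V} := [set fv i k | k : 'I_5].

Definition adj (x w : V) : bool :=
  [exists i : Face, exists k : 'I_5,
     ((fv i k == x) && (fv i k.+1 == w)) || ((fv i k == w) && (fv i k.+1 == x))].

Definition consec3 (u x w : V) : bool :=
  [exists i : Face, exists k : 'I_5,
     [&& fv i k == u, fv i k.+1 == x & fv i k.+2 == w]].

(* sigma x w : the counterclockwise successor (seen from outside) of the
   neighbour w among the three neighbours of x; sigma_inv x : its inverse. *)
Definition sigma (x w : V) : V := odflt x [pick u | consec3 u x w].
Definition sigma_inv (x w : V) : V := odflt x [pick u | consec3 w x u].

(* graph balls and the antipodal map antipode = -id restricted to vertices
   (the antipode of x is the unique vertex at graph distance 5) *)
Fixpoint ball (k : nat) (x : V) : {set V} :=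
  match k with
  | 0 => [set x]
  | k'.+1 => ball k' x :|: [set w | [exists u in ball k' x, adj u w]]
  end.
Definition antipode (x : V) : V := odflt x [pick y | y \notin ball 4 x].

(* The five inscribed cubes: 8-sets of vertices meeting every face in
   exactly two non-adjacent vertices (a diagonal of the face = an edge of
   the cube).  Two vertices of a cube are adjacent in the cube iff they
   lie on a common face of D. *)
Definition is_cube (S : {set V}) : bool :=
  (#|S| == 8)%N &&
  [forall i : Face, (#|S :&: face_set i| == 2)%N &&
     [forall a in S :&: face_set i, forall b in S :&: face_set i, ~~ adj a b]].

Definition cube_adj (x y : V) : bool :=
  (x != y) && [exists i : Face, (x \in face_set i) && (y \in face_set i)].

(* E is one of the two 4-element sets of pairwise non-adjacent vertices
   of the cube e *)
Definition is_tetra (e E : {set V}) : bool :=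
  [&& E \subset e, #|E| == 4%N & [forall x in E, forall y in E, ~~ cube_adj x y]].

(* Cells of Sigma.
   0-cells: corner(x,w) = the corner of the removed triangle at x lying on
     the edge xw (x,w adjacent), with corner(x,w) ~ corner(antipode x, antipode w).
   Edge-type 1-cells: ES(x,w) = the truncated edge from corner(x,w) to
     corner(w,x), oriented from x to w (so ES(w,x) = - ES(x,w)).
   Truncation-type 1-cells: TS(x,w) = side of the removed triangle at x
     from corner(x,w) to corner(x, sigma x w) (counterclockwise); the
     identification p ~ antipode p gives TS(x,w) = - TS(antipode x, antipode (sigma x w)).
   2-cells: the 12 truncated faces (decagons).
   A 1-chain is stored as a function on keys (x, w, b): b = true gives
   the coefficient of ES(x,w), b = false the coefficient of TS(x,w); a
   genuine chain of Sigma is a function satisfying [chain_ok]. *)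
Definition key := (V * V * bool)%type.
Definition chain := {ffun key -> int}.

Definition chain_ok (c : chain) : bool :=
  [forall k : key, ~~ adj k.1.1 k.1.2 ==> (c k == 0)] &&
  [forall a : V, forall b : V, adj a b ==>
     (c (b, a, true) == - c (a, b, true)) &&
     (c (antipode a, antipode (sigma a b), false) == - c (a, b, false))].

Definition es_cell (x w : V) : chain :=
  [ffun k : key => (k == (x, w, true))%:R - (k == (w, x, true))%:R].
Definition ts_cell (x w : V) : chain :=
  [ffun k : key => (k == (x, w, false))%:R
                   - (k == (antipode x, antipode (sigma x w), false))%:R].

(* cycle condition: at the 0-cell corner(x,w) the four incident half-edges
   are ES(x,w), ES(antipode x, antipode w) (outgoing), TS(x,w) (outgoing) and
   TS(x, sigma_inv x w) (incoming); the total outflow must vanish. *)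
Definition is_cycle (c : chain) : bool :=
  chain_ok c &&
  [forall x : V, forall w : V, adj x w ==>
     (c (x, w, true) + c (antipode x, antipode w, true) + c (x, w, false)
      - c (x, sigma_inv x w, false) == 0)].

Definition face_boundary (i : Face) : chain :=
  \sum_(k < 5) (es_cell (fv i k) (fv i k.+1) - ts_cell (fv i k.+1) (fv i k.+2)).

Definition is_boundary (c : chain) : Prop :=
  exists n : {ffun Face -> int}, c = \sum_(i : Face) face_boundary i *~ n i.

Definition homologous (a b : chain) : Prop := is_boundary (a - b).

(* Intersection pairing <a,b> (a, b cycles): ribbon-graph formula
   <a,b> = 1/2 sum_{0-cells v} omega_v(a,b), where at the 0-cell
   corner(x,w) the incident half-edges in counterclockwise order are
   TS(x, sigma_inv x w), ES(x,w), TS(x,w), ES(antipode x, antipode w), the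
   outflows of a chain on them are [flows], and
   omega(a,b) = sum_{i<j} (a_i b_j - a_j b_i).  Each 0-cell is
   represented by two keys (x,w) and (antipode x, antipode w), whence the
   division by 4.  Convention: <a,b> = +1 at a transverse crossing
   where (a', b') is positively oriented (orientation of D by the
   outward normal). *)
Definition flows (c : chain) (x w : V) : seq int :=
  [:: - c (x, sigma_inv x w, false); c (x, w, true); c (x, w, false);
      c (antipode x, antipode w, true)].

Definition omega (a b : seq int) : int :=
  \sum_(0 <= i < 4) \sum_(i.+1 <= j < 4) (a`_i * b`_j - a`_j * b`_i).

Definition inter (a b : chain) : int :=
  ((\sum_(x : V) \sum_(w : V | adj x w) omega (flows a x w) (flows b x w)) %/ 4)%Z.

Definition delta_trc (x : V) : chain := \sum_(w : V | adj x w) ts_cell x w.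
Definition delta_edge (y : V * V) : chain :=
  es_cell y.1 y.2 - es_cell (antipode y.1) (antipode y.2).

(* Picard--Lefschetz: h |-> h + sum_{delta in Delta/{+-1}} <h,delta> delta,
   where Delta = {delta i | P i} and the sum runs over one representative
   (the first index in enumeration order) of each class {delta, -delta}. *)
Definition picard_lefschetz (I : finType) (P : pred I) (delta : I -> chain)
    (h : chain) : chain :=
  h + \sum_(i | P i && [forall j, (P j && ((delta j == delta i) || (delta j == - delta i)))
                                    ==> (enum_rank i <= enum_rank j)%N])
        delta i *~ inter h (delta i).

Definition rho_trc : chain -> chain := picard_lefschetz (@predT V) delta_trc.
Definition rho_edge : chain -> chain :=
  picard_lefschetz (fun y : V * V => adj y.1 y.2) delta_edge.

Definition u_trc (E : {set V}) : chain := \sum_(x in E) delta_trc x.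
Definition u_edge (E : {set V}) : chain :=
  \sum_(x in E) \sum_(w : V | adj x w) delta_edge (x, w).

(* Main.v *)
From HB Require Import structures.
Require Import Defs.
From mathcomp Require Import all_boot all_order all_algebra.
From mathcomp Require Import ring.
Import GRing.Theory.
Set Implicit Arguments.
Unset Strict Implicit.
Unset Printing Implicit Defensive.
Local Open Scope ring_scope.

Definition toO (n m : nat) : option 'I_n :=
  (if (m < n)%N as b return ((m < n)%N = b -> option 'I_n)
   then fun h => Some (Ordinal h) else fun _ => None) (erefl (m < n)%N).

Lemma toO_gen n m b (e : (m < n)%N = b) :
  (if b as b' return ((m < n)%N = b' -> option 'I_n)
   then fun h => Some (Ordinal h) else fun _ => None) e = insub m.
Proof.
case: b e => e; first by rewrite (insubT (fun x => x < n)%N e).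
by rewrite insubN ?e.
Qed.

Lemma toOE n m : toO n m = insub m.
Proof. exact: toO_gen. Qed.

Definition ordl n : seq 'I_n := pmap (toO n) (iota 0 n).

Lemma ordlE n : ordl n = enum 'I_n.
Proof.
apply: (inj_map val_inj); rewrite val_enum_ord /ordl (eq_pmap (toOE n)).
exact: val_ord_enum.
Qed.

Lemma mem_ordl n (i : 'I_n) : i \in ordl n.
Proof. by rewrite ordlE mem_enum. Qed.

Lemma uniq_ordl n : uniq (ordl n).
Proof. by rewrite ordlE enum_uniq. Qed.

Definition toV (n : nat) : V := odflt ord0 (toO 20 n).

Lemma toVE n : toV n = inord n.
Proof. by rewrite /toV toOE. Qed.

Lemma big_list (T : finType) (l : seq T) (R : Type) (idx : R)
   (op : Monoid.com_law idx) (P : pred T) F :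
  uniq l -> (forall x, x \in l) ->
  \big[op/idx]_(i | P i) F i = \big[op/idx]_(i <- l | P i) F i.
Proof.
move=> ul ml; apply: perm_big; apply: uniq_perm => //; first exact: index_enum_uniq.
by move=> x; rewrite mem_index_enum ml.
Qed.

Lemma forall_list (T : finType) (l : seq T) (P : pred T) :
  (forall x, x \in l) -> [forall x, P x] = all P l.
Proof.
move=> ml; apply/forallP/allP => H x //; exact: H (ml x).
Qed.

Lemma exists_list (T : finType) (l : seq T) (P : pred T) :
  (forall x, x \in l) -> [exists x, P x] = has P l.
Proof.
move=> ml; apply/existsP/hasP => [[x Px]|[x _ Px]]; last by exists x.
by exists x => //; exact: ml.
Qed.

Lemma pick_ordl n (P : pred 'I_n) : [pick x | P x] = ohead (filter P (ordl n)).
Proof.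
rewrite ordlE /pick enumT.
by congr ohead; apply: eq_filter.
Qed.

Lemma eqhas T (a1 a2 : pred T) l : (forall x, a1 x = a2 x) -> has a1 l = has a2 l.
Proof. by move=> h; apply: eq_has. Qed.
Lemma eqall T (a1 a2 : pred T) l : (forall x, a1 x = a2 x) -> all a1 l = all a2 l.
Proof. by move=> h; apply: eq_all. Qed.

Definition pairsl : seq (V * V) := [seq (x, y) | x <- ordl 20, y <- ordl 20].

Lemma enum_pairs : Finite.enum (V * V)%type = pairsl.
Proof. rewrite Finite.enum.unlock /pairsl ordlE. by []. Qed.

Lemma enum_rankE (T : finType) (x : T) : (enum_rank x : nat) = index x (Finite.enum T).
Proof.
rewrite -enumT.
rewrite -[x in index x _](enum_rankK x) /enum_val index_uniq ?enum_uniq //.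
by rewrite -cardE ltn_ord.
Qed.
Definition antiL : seq nat := [:: 7;6;5;4;3;2;1;0;17;18;19;14;15;16;11;12;13;8;9;10 ].
Definition sigL : seq (seq nat) := [:: [::0;0;0;0;0;0;0;0;10;8;9;0;0;0;0;0;0;0;0;0];
  [::1;1;1;1;1;1;1;1;1;13;1;9;1;11;1;1;1;1;1;1];
  [::2;2;2;2;2;2;2;2;2;2;14;2;10;2;12;2;2;2;2;2];
  [::3;3;3;3;3;3;3;3;3;3;3;3;17;12;3;3;3;13;3;3];
  [::4;4;4;4;4;4;4;4;15;4;4;4;4;4;4;16;8;4;4;4];
  [::5;5;5;5;5;5;5;5;5;5;5;19;5;5;5;11;5;5;5;15];
  [::6;6;6;6;6;6;6;6;6;6;6;6;6;6;16;6;18;6;14;6];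
  [::7;7;7;7;7;7;7;7;7;7;7;7;7;7;7;7;7;18;19;17];
  [::4;8;8;8;14;8;8;8;8;8;8;8;8;8;0;8;8;8;8;8];
  [::1;15;9;9;9;9;9;9;9;9;9;9;9;9;9;0;9;9;9;9];
  [::2;10;13;10;10;10;10;10;10;10;10;10;10;0;10;10;10;10;10;10];
  [::11;17;11;11;11;1;11;11;11;11;11;11;11;11;11;11;11;5;11;11];
  [::12;12;18;2;12;12;12;12;12;12;12;12;12;12;12;12;12;12;3;12];
  [::13;10;13;1;13;13;13;13;13;13;3;13;13;13;13;13;13;13;13;13];
  [::14;14;8;14;14;14;2;14;6;14;14;14;14;14;14;14;14;14;14;14];
  [::15;15;15;15;9;4;15;15;15;5;15;15;15;15;15;15;15;15;15;15];
  [::16;16;16;16;19;16;4;16;16;16;16;16;16;16;16;16;16;16;16;6];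
  [::17;17;17;7;17;17;17;11;17;17;17;3;17;17;17;17;17;17;17;17];
  [::18;18;18;18;18;18;7;12;18;18;18;18;6;18;18;18;18;18;18;18];
  [::19;19;19;19;19;7;19;16;19;19;19;19;19;19;19;19;5;19;19;19] ].
Definition sigiL : seq (seq nat) := [:: [::0;0;0;0;0;0;0;0;9;10;8;0;0;0;0;0;0;0;0;0];
  [::1;1;1;1;1;1;1;1;1;11;1;13;1;9;1;1;1;1;1;1];
  [::2;2;2;2;2;2;2;2;2;2;12;2;14;2;10;2;2;2;2;2];
  [::3;3;3;3;3;3;3;3;3;3;3;3;13;17;3;3;3;12;3;3];
  [::4;4;4;4;4;4;4;4;16;4;4;4;4;4;4;8;15;4;4;4];
  [::5;5;5;5;5;5;5;5;5;5;5;15;5;5;5;19;5;5;5;11];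
  [::6;6;6;6;6;6;6;6;6;6;6;6;6;6;18;6;14;6;16;6];
  [::7;7;7;7;7;7;7;7;7;7;7;7;7;7;7;7;7;19;17;18];
  [::14;8;8;8;0;8;8;8;8;8;8;8;8;8;4;8;8;8;8;8];
  [::15;0;9;9;9;9;9;9;9;9;9;9;9;9;9;1;9;9;9;9];
  [::13;10;0;10;10;10;10;10;10;10;10;10;10;2;10;10;10;10;10;10];
  [::11;5;11;11;11;17;11;11;11;11;11;11;11;11;11;11;11;1;11;11];
  [::12;12;3;18;12;12;12;12;12;12;12;12;12;12;12;12;12;12;2;12];
  [::13;3;13;10;13;13;13;13;13;13;1;13;13;13;13;13;13;13;13;13];
  [::14;14;6;14;14;14;8;14;2;14;14;14;14;14;14;14;14;14;14;14];
  [::15;15;15;15;5;9;15;15;15;4;15;15;15;15;15;15;15;15;15;15];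
  [::16;16;16;16;6;16;19;16;16;16;16;16;16;16;16;16;16;16;16;4];
  [::17;17;17;11;17;17;17;3;17;17;17;7;17;17;17;17;17;17;17;17];
  [::18;18;18;18;18;18;12;6;18;18;18;18;7;18;18;18;18;18;18;18];
  [::19;19;19;19;19;16;19;5;19;19;19;19;19;19;19;19;7;19;19;19] ].
Definition adjL : seq (seq nat) := [:: [::0;0;0;0;0;0;0;0;1;1;1;0;0;0;0;0;0;0;0;0];
  [::0;0;0;0;0;0;0;0;0;1;0;1;0;1;0;0;0;0;0;0];
  [::0;0;0;0;0;0;0;0;0;0;1;0;1;0;1;0;0;0;0;0];
  [::0;0;0;0;0;0;0;0;0;0;0;0;1;1;0;0;0;1;0;0];
  [::0;0;0;0;0;0;0;0;1;0;0;0;0;0;0;1;1;0;0;0];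
  [::0;0;0;0;0;0;0;0;0;0;0;1;0;0;0;1;0;0;0;1];
  [::0;0;0;0;0;0;0;0;0;0;0;0;0;0;1;0;1;0;1;0];
  [::0;0;0;0;0;0;0;0;0;0;0;0;0;0;0;0;0;1;1;1];
  [::1;0;0;0;1;0;0;0;0;0;0;0;0;0;1;0;0;0;0;0];
  [::1;1;0;0;0;0;0;0;0;0;0;0;0;0;0;1;0;0;0;0];
  [::1;0;1;0;0;0;0;0;0;0;0;0;0;1;0;0;0;0;0;0];
  [::0;1;0;0;0;1;0;0;0;0;0;0;0;0;0;0;0;1;0;0];
  [::0;0;1;1;0;0;0;0;0;0;0;0;0;0;0;0;0;0;1;0];
  [::0;1;0;1;0;0;0;0;0;0;1;0;0;0;0;0;0;0;0;0];
  [::0;0;1;0;0;0;1;0;1;0;0;0;0;0;0;0;0;0;0;0];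
  [::0;0;0;0;1;1;0;0;0;1;0;0;0;0;0;0;0;0;0;0];
  [::0;0;0;0;1;0;1;0;0;0;0;0;0;0;0;0;0;0;0;1];
  [::0;0;0;1;0;0;0;1;0;0;0;1;0;0;0;0;0;0;0;0];
  [::0;0;0;0;0;0;1;1;0;0;0;0;1;0;0;0;0;0;0;0];
  [::0;0;0;0;0;1;0;1;0;0;0;0;0;0;0;0;1;0;0;0] ].
Definition cadjL : seq (seq nat) := [:: [::0;1;1;0;1;0;0;0;1;1;1;0;0;1;1;1;0;0;0;0];
  [::1;0;0;1;0;1;0;0;0;1;1;1;0;1;0;1;0;1;0;0];
  [::1;0;0;1;0;0;1;0;1;0;1;0;1;1;1;0;0;0;1;0];
  [::0;1;1;0;0;0;0;1;0;0;1;1;1;1;0;0;0;1;1;0];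
  [::1;0;0;0;0;1;1;0;1;1;0;0;0;0;1;1;1;0;0;1];
  [::0;1;0;0;1;0;0;1;0;1;0;1;0;0;0;1;1;1;0;1];
  [::0;0;1;0;1;0;0;1;1;0;0;0;1;0;1;0;1;0;1;1];
  [::0;0;0;1;0;1;1;0;0;0;0;1;1;0;0;0;1;1;1;1];
  [::1;0;1;0;1;0;1;0;0;1;1;0;0;0;1;1;1;0;0;0];
  [::1;1;0;0;1;1;0;0;1;0;1;1;0;1;0;1;0;0;0;0];
  [::1;1;1;1;0;0;0;0;1;1;0;0;1;1;1;0;0;0;0;0];
  [::0;1;0;1;0;1;0;1;0;1;0;0;0;1;0;1;0;1;0;1];
  [::0;0;1;1;0;0;1;1;0;0;1;0;0;1;1;0;0;1;1;0];
  [::1;1;1;1;0;0;0;0;0;1;1;1;1;0;0;0;0;1;0;0];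
  [::1;0;1;0;1;0;1;0;1;0;1;0;1;0;0;0;1;0;1;0];
  [::1;1;0;0;1;1;0;0;1;1;0;1;0;0;0;0;1;0;0;1];
  [::0;0;0;0;1;1;1;1;1;0;0;0;0;0;1;1;0;0;1;1];
  [::0;1;0;1;0;1;0;1;0;0;0;1;1;1;0;0;0;0;1;1];
  [::0;0;1;1;0;0;1;1;0;0;0;0;1;0;1;0;1;1;0;1];
  [::0;0;0;0;1;1;1;1;0;0;0;1;0;0;0;1;1;1;1;0] ].

Definition tabN (t : seq (seq nat)) (x w : nat) : nat := nth 0%N (nth [::] t x) w.
Definition antiT (x : V) : V := toV (nth 0%N antiL x).
Definition sigT (x w : V) : V := toV (tabN sigL x w).
Definition sigiT (x w : V) : V := toV (tabN sigiL x w).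
Definition adjT (x w : V) : bool := tabN adjL x w == 1%N.
Definition cadjT (x w : V) : bool := tabN cadjL x w == 1%N.

Definition fvT (i : Face) (k : nat) : V := toV (nth 0%N (nth [::] face_list i) (k %% 5)).

Lemma fvE i k : fv i k = fvT i k.
Proof. by rewrite /fv /fvT toVE. Qed.

Definition adjC (x w : V) : bool :=
  has (fun i : Face => has (fun k : 'I_5 =>
     ((fvT i k == x) && (fvT i k.+1 == w)) || ((fvT i k == w) && (fvT i k.+1 == x)))
     (ordl 5)) (ordl 12).

Lemma adjCE x w : adj x w = adjC x w.
Proof.
rewrite /adj /adjC (exists_list _ (@mem_ordl 12)); apply: eqhas => i.
rewrite (exists_list _ (@mem_ordl 5)); apply: eqhas => k.
by rewrite !fvE.
Qed.

Lemma adjE x w : adj x w = adjT x w.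
Proof.
rewrite adjCE; move: x w.
have H : all (fun x => all (fun w => adjC x w == adjT x w) (ordl 20)) (ordl 20).
  by vm_compute.
move=> x w; move/allP: H => /(_ x (mem_ordl x)) /allP /(_ w (mem_ordl w)).
by move/eqP.
Qed.

Definition consecC (u x w : V) : bool :=
  has (fun i : Face => has (fun k : 'I_5 =>
     [&& fvT i k == u, fvT i k.+1 == x & fvT i k.+2 == w]) (ordl 5)) (ordl 12).

Lemma consecE u x w : consec3 u x w = consecC u x w.
Proof.
rewrite /consec3 /consecC (exists_list _ (@mem_ordl 12)); apply: eqhas => i.
rewrite (exists_list _ (@mem_ordl 5)); apply: eqhas => k.
by rewrite !fvE.
Qed.

Lemma all2V (P : V -> V -> bool) :
  all (fun x => all (fun w => P x w) (ordl 20)) (ordl 20) -> forall x w, P x w.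
Proof.
move=> H x w; move/allP: H => /(_ x (mem_ordl x)) /allP /(_ w (mem_ordl w)) //.
Qed.

Lemma sigmaE x w : sigma x w = sigT x w.
Proof.
rewrite /sigma pick_ordl (eq_filter (a2 := fun u => consecC u x w)); last first.
  by move=> u; rewrite consecE.
apply/eqP; apply: (all2V (P := fun x w =>
  odflt x (ohead (filter (fun u => consecC u x w) (ordl 20))) == sigT x w)).
by vm_compute.
Qed.

Lemma sigma_invE x w : sigma_inv x w = sigiT x w.
Proof.
rewrite /sigma_inv pick_ordl (eq_filter (a2 := fun u => consecC w x u)); last first.
  by move=> u; rewrite consecE.
apply/eqP; apply: (all2V (P := fun x w =>
  odflt x (ohead (filter (fun u => consecC w x u) (ordl 20))) == sigiT x w)).
by vm_compute.
Qed.

Fixpoint ballC (k : nat) (x y : V) : bool :=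
  match k with
  | 0 => y == x
  | k'.+1 => if ballC k' x y then true
             else has (fun u => if adjT u y then ballC k' x u else false) (ordl 20)
  end.

Lemma ballCS k x y : ballC k.+1 x y =
  ballC k x y || has (fun u => adjT u y && ballC k x u) (ordl 20).
Proof. by []. Qed.

Lemma ballE k x y : (y \in ball k x) = ballC k x y.
Proof.
elim: k y => [|k IH] y; first by rewrite /= in_set1.
rewrite [ball k.+1 x]/= ballCS.
rewrite in_setU IH in_set (exists_list _ (@mem_ordl 20)); congr (_ || _).
by apply: eqhas => u; rewrite IH adjE andbC.
Qed.

Lemma antipodeE x : antipode x = antiT x.
Proof.
rewrite /antipode pick_ordl (eq_filter (a2 := fun y => ~~ ballC 4 x y)); last first.
  by move=> y; rewrite ballE.
have H : all (fun x => odflt x (ohead (filter (fun y => ~~ ballC 4 x y) (ordl 20)))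
   == antiT x) (ordl 20) by vm_compute.
exact/eqP/(allP H x (mem_ordl x)).
Qed.

Definition sumI {A : Type} {R : nmodType} (l : seq A) (f : A -> R) : R :=
  foldr (fun a s => f a + s) 0 l.

Lemma sumIE A (R : nmodType) (l : seq A) (f : A -> R) : \sum_(i <- l) f i = sumI l f.
Proof. by elim: l => [|a l IH]; rewrite ?big_nil ?big_cons ?IH. Qed.

Lemma eq_sumI A (R : nmodType) (l : seq A) (f g : A -> R) :
  (forall x, f x = g x) -> sumI l f = sumI l g.
Proof. by move=> h; elim: l => //= a l ->; rewrite h. Qed.

Lemma sumI_ffun A (l : seq A) (f : A -> chain) k : (sumI l f) k = sumI l (fun a => f a k).
Proof. by elim: l => [|a l IH] /=; rewrite !ffunE ?IH. Qed.

Fixpoint allz {T} (f : T -> bool) (l : seq T) : bool :=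
  match l with [::] => true | x :: s => if f x then allz f s else false end.
Fixpoint hasz {T} (f : T -> bool) (l : seq T) : bool :=
  match l with [::] => false | x :: s => if f x then true else hasz f s end.
Lemma allzE T (f : T -> bool) l : allz f l = all f l.
Proof. by elim: l => //= x s ->; case: (f x). Qed.
Lemma haszE T (f : T -> bool) l : hasz f l = has f l.
Proof. by elim: l => //= x s ->; case: (f x). Qed.

Definition veq (a b : V) : bool := eqn (nat_of_ord a) (nat_of_ord b).
Lemma veqE a b : veq a b = (a == b).
Proof. by []. Qed.

Definition keq (k : key) (x w : V) (b : bool) : bool :=
  if veq k.1.1 x then if veq k.1.2 w then (if b then k.2 else ~~ k.2) else false else false.
Lemma keqE k x w b : keq k x w b = (k == (x, w, b)).
Proof.
case: k => [[x' w'] b']; rewrite /keq /= !veqE !xpair_eqE.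
by case: (x' == x); case: (w' == w); case: b; case: b'.
Qed.

Definition b2z (b : bool) : int := if b then Posz 1 else Posz 0.
Lemma b2zE b : b2z b = b%:R.
Proof. by case: b. Qed.

Definition zadd := intZmod.addz.
Definition zopp := intZmod.oppz.
Definition zmul := intRing.mulz.
Definition zsub a b := zadd a (zopp b).
Lemma zaddE a b : zadd a b = a + b. Proof. by []. Qed.
Lemma zoppE a : zopp a = - a. Proof. by []. Qed.
Lemma zmulE a b : zmul a b = a * b. Proof. by []. Qed.
Lemma zsubE a b : zsub a b = a - b. Proof. by []. Qed.

Definition sumZ {A : Type} (l : seq A) (f : A -> int) : int :=
  foldr (fun a s => zadd (f a) s) (Posz 0) l.
Lemma sumZE A (l : seq A) (f : A -> int) : sumZ l f = sumI l f.
Proof. by elim: l => //= a l ->. Qed.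
Lemma eq_sumZ A (l : seq A) (f g : A -> int) :
  (forall x, f x = g x) -> sumZ l f = sumZ l g.
Proof. by move=> h; rewrite !sumZE; apply: eq_sumI. Qed.

Definition esF (x w : V) (k : key) : int :=
  zsub (b2z (keq k x w true)) (b2z (keq k w x true)).
Definition tsF (x w : V) (k : key) : int :=
  zsub (b2z (keq k x w false)) (b2z (keq k (antiT x) (antiT (sigT x w)) false)).

Lemma esE x w k : es_cell x w k = esF x w k.
Proof. by rewrite ffunE /esF zsubE !b2zE !keqE. Qed.
Lemma tsE x w k : ts_cell x w k = tsF x w k.
Proof. by rewrite ffunE /tsF zsubE !b2zE !keqE !antipodeE sigmaE. Qed.

Definition fbF (i : Face) k : int :=
  sumZ (ordl 5) (fun j : 'I_5 => zsub (esF (fvT i j) (fvT i j.+1) k) (tsF (fvT i j.+1) (fvT i j.+2) k)).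

Lemma subchE (c d : chain) k : (c - d) k = c k - d k.
Proof. by rewrite !ffunE. Qed.

Lemma fbE i k : face_boundary i k = fbF i k.
Proof.
rewrite /face_boundary sum_ffunE (@big_list _ (ordl 5) _ _ _ _ _ (uniq_ordl 5) (@mem_ordl 5)) sumIE.
rewrite /fbF sumZE; apply: eq_sumI => j.
by rewrite subchE esE tsE !fvE zsubE.
Qed.

Definition nbrL : seq (seq nat) := [:: [::8;9;10];
  [::9;11;13];
  [::10;12;14];
  [::12;13;17];
  [::8;15;16];
  [::11;15;19];
  [::14;16;18];
  [::17;18;19];
  [::0;4;14];
  [::0;1;15];
  [::0;2;13];
  [::1;5;17];
  [::2;3;18];
  [::1;3;10];
  [::2;6;8];
  [::4;5;9];
  [::4;6;19];
  [::3;7;11];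
  [::6;7;12];
  [::5;7;16] ].

Definition adjl (x : V) : seq V := map toV (nth [::] nbrL x).

Lemma adjlE x : filter (adjT x) (ordl 20) = adjl x.
Proof.
have H : all (fun x => filter (adjT x) (ordl 20) == adjl x) (ordl 20) by vm_compute.
exact/eqP/(allP H x (mem_ordl x)).
Qed.

Lemma sum_adj (R : nmodType) x (F : V -> R) :
  \sum_(w : V | adj x w) F w = sumI (adjl x) F.
Proof.
rewrite (@big_list _ (ordl 20) _ _ _ _ _ (uniq_ordl 20) (@mem_ordl 20)) -big_filter sumIE -adjlE.
by congr sumI; apply: eq_filter => w; rewrite adjE.
Qed.

Definition dtF (x : V) k : int := sumZ (adjl x) (fun w => tsF x w k).
Lemma dtE x k : delta_trc x k = dtF x k.
Proof. by rewrite sum_ffunE sum_adj /dtF sumZE; apply: eq_sumI => w; rewrite tsE. Qed.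

Definition deF (y : V * V) k : int := zsub (esF y.1 y.2 k) (esF (antiT y.1) (antiT y.2) k).
Lemma deE y k : delta_edge y k = deF y k.
Proof. by rewrite subchE !esE !antipodeE. Qed.

Definition utF (s : seq V) k : int := sumZ s (fun x => dtF x k).
Definition ueF (s : seq V) k : int := sumZ s (fun x => sumZ (adjl x) (fun w => deF (x, w) k)).

Definition ut (s : seq V) : chain := \sum_(x <- s) delta_trc x.
Definition ue (s : seq V) : chain := \sum_(x <- s) \sum_(w : V | adj x w) delta_edge (x, w).

Lemma utE s k : ut s k = utF s k.
Proof. by rewrite sum_ffunE sumIE /utF sumZE; apply: eq_sumI => x; rewrite dtE. Qed.
Lemma ueE s k : ue s k = ueF s k.
Proof.
rewrite sum_ffunE sumIE /ueF sumZE; apply: eq_sumI => x.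
by rewrite sum_ffunE sum_adj sumZE; apply: eq_sumI => w; rewrite deE.
Qed.

Definition rawS (a b : chain) : int :=
  \sum_(x : V) \sum_(w : V | adj x w) omega (flows a x w) (flows b x w).

Lemma interE a b : inter a b = (rawS a b %/ 4)%Z.
Proof. by []. Qed.

Definition rawSl (b a : chain) : int := rawS a b.

Lemma rawSB b : zmod_morphism (rawSl b).
Proof.
move=> x y; rewrite /rawSl /rawS -sumrB; apply: eq_bigr => u _.
rewrite -sumrB; apply: eq_bigr => w _.
rewrite /omega /flows /index_iota /= !big_cons !big_nil /= !ffunE.
ring.
Qed.

HB.instance Definition _ b := GRing.isZmodMorphism.Build chain int (rawSl b) (rawSB b).

Definition flowsF (c : key -> int) (x w : V) : seq int :=
  [:: zopp (c (x, sigiT x w, false)); c (x, w, true); c (x, w, false);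
      c (antiT x, antiT w, true)].

Definition om2 (a b : seq int) (i j : nat) : int :=
  zsub (zmul (nth 0 a i) (nth 0 b j)) (zmul (nth 0 a j) (nth 0 b i)).

Definition omegaF (a b : seq int) : int :=
  zadd (om2 a b 0 1) (zadd (om2 a b 0 2) (zadd (om2 a b 0 3)
    (zadd (om2 a b 1 2) (zadd (om2 a b 1 3) (om2 a b 2 3))))).

Lemma omegaE a b : omega a b = omegaF a b.
Proof.
rewrite /omega /omegaF /om2 /index_iota /= !big_cons !big_nil /=.
rewrite !zaddE !zsubE !zmulE.
ring.
Qed.

Definition rawF (c d : key -> int) : int :=
  sumZ (ordl 20) (fun x => sumZ (adjl x) (fun w => omegaF (flowsF c x w) (flowsF d x w))).

Lemma rawSE a b : rawS a b = rawF (fun k => a k) (fun k => b k).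
Proof.
rewrite /rawS (@big_list _ (ordl 20) _ _ _ _ _ (uniq_ordl 20) (@mem_ordl 20)) sumIE.
rewrite /rawF sumZE; apply: eq_sumI => x; rewrite sum_adj sumZE; apply: eq_sumI => w.
by rewrite omegaE /flows /flowsF zoppE !antipodeE sigma_invE.
Qed.

Definition trcRepsV : seq V := map toV [:: 0;1;2;3;8;9;10;11;12;13 ].
Definition edRepsV : seq (V * V) := map (fun p => (toV p.1, toV p.2)) [:: (0,8);(0,9);(0,10);(1,9);(1,11);(1,13);(2,10);(2,12);(2,14);(3,12);(3,13);(3,17);(8,14);(9,15);(10,13) ].
Definition tetsL : seq (seq nat) := [:: [::0;3;5;6];[::1;2;4;7];[::0;11;12;16];[::7;13;14;15];[::1;8;12;19];[::6;10;15;17];[::2;9;16;17];[::5;8;13;18];[::3;9;14;19];[::4;10;11;18] ].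

Lemma mem_pairsl (p : V * V) : p \in pairsl.
Proof. by rewrite -enum_pairs -enumT mem_enum. Qed.
Lemma uniq_pairsl : uniq pairsl.
Proof. by rewrite -enum_pairs -enumT enum_uniq. Qed.

Definition keysL : seq key := [seq (p, b) | p <- pairsl, b <- [:: true; false]].
Lemma mem_keysL (k : key) : k \in keysL.
Proof. by case: k => p b; apply/allpairsP; exists (p, b); rewrite mem_pairsl; case: b. Qed.

Definition eqCh (f g : key -> int) : bool := allz (fun k => f k == g k) keysL.

Lemma chain_eqE (c d : chain) : (c == d) = eqCh (fun k => c k) (fun k => d k).
Proof.
rewrite /eqCh allzE; apply/eqP/allP => [-> //|H]; apply/ffunP => k.
exact/eqP/H/mem_keysL.
Qed.

Lemma eqCh_ext f f' g g' : (forall k, f k = f' k) -> (forall k, g k = g' k) ->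
  eqCh f g = eqCh f' g'.
Proof. by move=> Hf Hg; rewrite /eqCh !allzE; apply: eq_all => k; rewrite Hf Hg. Qed.

Lemma oppchE (c : chain) k : (- c) k = - c k.
Proof. by rewrite ffunE. Qed.

Lemma dt_eq j i : (delta_trc j == delta_trc i) = eqCh (dtF j) (dtF i).
Proof. by rewrite chain_eqE; apply: eqCh_ext => k; rewrite dtE. Qed.
Lemma dt_eqN j i : (delta_trc j == - delta_trc i) = eqCh (dtF j) (fun k => - dtF i k).
Proof. by rewrite chain_eqE; apply: eqCh_ext => k; rewrite ?oppchE dtE. Qed.
Lemma de_eq j i : (delta_edge j == delta_edge i) = eqCh (deF j) (deF i).
Proof. by rewrite chain_eqE; apply: eqCh_ext => k; rewrite deE. Qed.
Lemma de_eqN j i : (delta_edge j == - delta_edge i) = eqCh (deF j) (fun k => - deF i k).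
Proof. by rewrite chain_eqE; apply: eqCh_ext => k; rewrite ?oppchE deE. Qed.

Definition condTC (i : V) : bool :=
  allz (fun j : V => if (i <= j)%N then true
     else ~~ (eqCh (dtF j) (dtF i) || eqCh (dtF j) (fun k => - dtF i k))) (ordl 20).

Lemma rho_trcE h :
  rho_trc h = h + sumI trcRepsV (fun i => delta_trc i *~ inter h (delta_trc i)).
Proof.
rewrite /rho_trc /picard_lefschetz; congr (_ + _).
rewrite (@big_list _ (ordl 20) _ _ _ _ _ (uniq_ordl 20) (@mem_ordl 20)) -big_filter sumIE.
congr sumI.
rewrite (eq_filter (a2 := condTC)); first by vm_compute.
move=> i /=; rewrite (forall_list _ (@mem_ordl 20)) /condTC allzE; apply: eq_all => j.
rewrite dt_eq dt_eqN !enum_rank_ord /=.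
by case: (i <= j)%N; case: (_ || _).
Qed.
Definition condEC (i : V * V) : bool :=
  allz (fun j : V * V => if (index i pairsl <= index j pairsl)%N then true
     else if adjT j.1 j.2 then
       ~~ (eqCh (deF j) (deF i) || eqCh (deF j) (fun k => - deF i k)) else true) pairsl.

Lemma rho_edgeE h :
  rho_edge h = h + sumI edRepsV (fun i => delta_edge i *~ inter h (delta_edge i)).
Proof.
rewrite /rho_edge /picard_lefschetz; congr (_ + _).
rewrite (@big_list _ pairsl _ _ _ _ _ uniq_pairsl mem_pairsl) -big_filter sumIE.
congr sumI.
rewrite (eq_filter (a2 := fun i => if adjT i.1 i.2 then condEC i else false)).
  by vm_compute.
move=> i /=; rewrite adjE; case: (adjT i.1 i.2) => //=.
rewrite (forall_list _ mem_pairsl) /condEC allzE; apply: eq_all => j.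
rewrite de_eq de_eqN !enum_rankE enum_pairs adjE.
by case: (index i pairsl <= index j pairsl)%N; case: (adjT j.1 j.2); case: (_ || _).
Qed.

Lemma rawF_ext f f' g g' : (forall k, f k = f' k) -> (forall k, g k = g' k) ->
  rawF f g = rawF f' g'.
Proof.
move=> Hf Hg; rewrite /rawF; apply: eq_sumZ => x; apply: eq_sumZ => w.
by rewrite /flowsF !Hf !Hg.
Qed.

Lemma eq_sumI_in (A : eqType) (R : nmodType) (l : seq A) (f g : A -> R) :
  (forall x, x \in l -> f x = g x) -> sumI l f = sumI l g.
Proof.
elim: l => //= a l IH h; rewrite h ?mem_head // IH // => x xl.
by apply: h; rewrite in_cons xl orbT.
Qed.

Lemma sumI0 A (R : nmodType) (l : seq A) : sumI l (fun _ => (0 : R)) = 0.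
Proof. by elim: l => //= a l ->; rewrite addr0. Qed.

Lemma orth_check :
  allz (fun i : Face => allz (fun x => rawF (fbF i) (dtF x) == 0) trcRepsV) (ordl 12) &&
  allz (fun i : Face => allz (fun y => rawF (fbF i) (deF y) == 0) edRepsV) (ordl 12).
Proof. by vm_compute. Qed.

Lemma fb_orth_trc i x : x \in trcRepsV -> rawS (face_boundary i) (delta_trc x) = 0.
Proof.
move=> hx; rewrite rawSE (rawF_ext (f' := fbF i) (g' := dtF x)); last 2 first.
- exact: fbE.
- exact: dtE.
apply/eqP; move/andP: orth_check => [+ _]; rewrite allzE => /allP /(_ i (mem_ordl i)).
by rewrite allzE => /allP /(_ x hx).
Qed.

Lemma fb_orth_edge i y : y \in edRepsV -> rawS (face_boundary i) (delta_edge y) = 0.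
Proof.
move=> hy; rewrite rawSE (rawF_ext (f' := fbF i) (g' := deF y)); last 2 first.
- exact: fbE.
- exact: deE.
apply/eqP; move/andP: orth_check => [_ +]; rewrite allzE => /allP /(_ i (mem_ordl i)).
by rewrite allzE => /allP /(_ y hy).
Qed.

Lemma boundary_orth (c d : chain) : is_boundary c ->
  (forall i, rawS (face_boundary i) d = 0) -> rawS c d = 0.
Proof.
move=> [n ->] H; rewrite -[LHS]/(rawSl d _) raddf_sum big1 // => i _.
rewrite raddfMz; change (rawS (face_boundary i) d *~ n i = 0).
by rewrite H mul0rz.
Qed.

Lemma interW (W : chain) s d : is_boundary (W *+ 3 - ue s) ->
  (forall i, rawS (face_boundary i) d = 0) -> (12 %| rawS (ue s) d)%Z ->
  inter W d = (rawS (ue s) d %/ 12)%Z.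
Proof.
move=> Hb Hfb /dvdzP [q Hq].
have H0 := boundary_orth Hb Hfb.
move: H0; rewrite -[LHS]/(rawSl d _) raddfB raddfMn => H0.
change (rawS W d *+ 3 - rawS (ue s) d = 0) in H0; rewrite Hq in H0.
have H1 : rawS W d = q * 4.
  apply/eqP; rewrite -subr_eq0.
  have : (rawS W d - q * 4) * 3 = 0.
    by rewrite -H0 -mulr_natr; ring.
  by move/eqP; rewrite mulf_eq0 orbF => /eqP ->.
by rewrite interE H1 Hq !mulzK.
Qed.

Definition lazyz (d c : int) : int := if d is Posz 0 then Posz 0 else zmul d c.
Lemma lazyzE d c : lazyz d c = d * c.
Proof. by case: d => [[|n]|n] //=; rewrite mul0r. Qed.

Definition zz (d : int) : bool := if d is Posz 0 then true else false.
Lemma zzE d : zz d = (d == 0).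
Proof. by case: d => [[|n]|n]. Qed.

Lemma sumI_map (A B : Type) (R : nmodType) (g : A -> B) (l : seq A) (f : B -> R) :
  sumI (map g l) f = sumI l (fun a => f (g a)).
Proof. by elim: l => //= a l ->. Qed.

Definition CT1 s := allz (fun i => zz (rawF (utF s) (dtF i))) trcRepsV.
Definition CT2 s := allz (fun i => (12 %| rawF (ueF s) (dtF i))%Z) trcRepsV.
Definition CT3 s :=
  let ks := map (fun i => (i, (rawF (ueF s) (dtF i) %/ 12)%Z)) trcRepsV in
  allz (fun k => sumZ ks (fun p => lazyz (dtF p.1 k) p.2) == utF s k) keysL.
Definition CT4 s := allz (fun y => zz (rawF (ueF s) (deF y))) edRepsV.
Definition CT5 s :=
  let ks := map (fun y => (y, (rawF (utF s) (deF y) %/ 4)%Z)) edRepsV in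
  allz (fun k => sumZ ks (fun p => lazyz (deF p.1 k) p.2) == zopp (ueF s k)) keysL.

Lemma sumI_mapp (A : Type) (R : nmodType) (g : A -> int) (l : seq A) (f : A -> int -> R) :
  sumI (map (fun i => (i, g i)) l) (fun p => f p.1 p.2) = sumI l (fun a => f a (g a)).
Proof. by elim: l => //= a l ->. Qed.

Lemma CT1_all : allz (fun t => CT1 (map toV t)) tetsL.
Proof. by vm_compute. Qed.
Lemma CT2_all : allz (fun t => CT2 (map toV t)) tetsL.
Proof. by vm_compute. Qed.
Lemma CT3_all : allz (fun t => CT3 (map toV t)) tetsL.
Proof. by vm_compute. Qed.
Lemma CT4_all : allz (fun t => CT4 (map toV t)) tetsL.
Proof. by vm_compute. Qed.
Lemma CT5_all : allz (fun t => CT5 (map toV t)) tetsL.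
Proof. by vm_compute. Qed.

Lemma raw_ut_dt s i : rawS (ut s) (delta_trc i) = rawF (utF s) (dtF i).
Proof. by rewrite rawSE; apply: rawF_ext => k; rewrite ?utE ?dtE. Qed.
Lemma raw_ue_dt s i : rawS (ue s) (delta_trc i) = rawF (ueF s) (dtF i).
Proof. by rewrite rawSE; apply: rawF_ext => k; rewrite ?ueE ?dtE. Qed.
Lemma raw_ut_de s y : rawS (ut s) (delta_edge y) = rawF (utF s) (deF y).
Proof. by rewrite rawSE; apply: rawF_ext => k; rewrite ?utE ?deE. Qed.
Lemma raw_ue_de s y : rawS (ue s) (delta_edge y) = rawF (ueF s) (deF y).
Proof. by rewrite rawSE; apply: rawF_ext => k; rewrite ?ueE ?deE. Qed.

Lemma mulzch (c : chain) (z : int) k : (c *~ z) k = c k * z.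
Proof. by rewrite ffunMzE mulrzz. Qed.

Lemma L1 s : CT1 s -> rho_trc (ut s) = ut s.
Proof.
rewrite /CT1 allzE => C1.
rewrite rho_trcE (eq_sumI_in (g := fun _ => 0)) ?sumI0 ?addr0 // => i hi.
by rewrite interE raw_ut_dt (eqP (etrans (esym (zzE _)) (allP C1 i hi))) div0z mulr0z.
Qed.

Lemma P1 s k : (sumI edRepsV (fun y => delta_edge y *~ inter (ut s) (delta_edge y))) k =
  sumI edRepsV (fun y => deF y k * (rawF (utF s) (deF y) %/ 4)%Z).
Proof.
rewrite sumI_ffun; apply: eq_sumI => y.
by rewrite mulzch deE interE raw_ut_de.
Qed.

Lemma P2 s k : CT5 s -> sumI edRepsV (fun y => deF y k * (rawF (utF s) (deF y) %/ 4)%Z) = - ueF s k.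
Proof.
rewrite /CT5 allzE => /allP /(_ k (mem_keysL k)) /eqP; rewrite zoppE => <-.
rewrite sumZE (@sumI_mapp _ _ _ _ (fun y c => lazyz (deF y k) c)).
by apply: eq_sumI => y; rewrite lazyzE.
Qed.

Lemma L2 s : CT5 s -> rho_edge (ut s) = ut s - ue s.
Proof.
move=> C5; rewrite rho_edgeE; congr (_ + _).
by apply/ffunP => k; rewrite P1 P2 // oppchE ueE.
Qed.

Lemma P3 s W k : is_boundary (W *+ 3 - ue s) -> CT2 s ->
  (sumI trcRepsV (fun i => delta_trc i *~ inter W (delta_trc i))) k =
  sumI trcRepsV (fun i => dtF i k * (rawF (ueF s) (dtF i) %/ 12)%Z).
Proof.
rewrite /CT2 allzE => HW C2.
rewrite sumI_ffun; apply: eq_sumI_in => i hi.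
rewrite mulzch dtE (interW HW) ?raw_ue_dt ?(allP C2 i hi) // => j.
exact: fb_orth_trc.
Qed.

Lemma P4 s k : CT3 s -> sumI trcRepsV (fun i => dtF i k * (rawF (ueF s) (dtF i) %/ 12)%Z) = utF s k.
Proof.
rewrite /CT3 allzE => /allP /(_ k (mem_keysL k)) /eqP <-.
rewrite sumZE (@sumI_mapp _ _ _ _ (fun i c => lazyz (dtF i k) c)).
by apply: eq_sumI => i; rewrite lazyzE.
Qed.

Lemma L3 s W : CT2 s -> CT3 s -> is_boundary (W *+ 3 - ue s) -> rho_trc W = W + ut s.
Proof.
move=> C2 C3 HW; rewrite rho_trcE; congr (_ + _).
by apply/ffunP => k; rewrite (P3 _ HW) // P4 // utE.
Qed.

Lemma L4 s W : CT4 s -> is_boundary (W *+ 3 - ue s) -> rho_edge W = W.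
Proof.
rewrite /CT4 allzE => C4 HW.
rewrite rho_edgeE (eq_sumI_in (g := fun _ => 0)) ?sumI0 ?addr0 // => y hy.
have Hz : rawS (ue s) (delta_edge y) = 0.
  by rewrite raw_ue_de; apply/eqP; rewrite -zzE; exact: (allP C4 y hy).
rewrite (interW HW) ?Hz ?div0z ?mulr0z ?dvdz0 // => j.
exact: fb_orth_edge.
Qed.

Lemma main_t t : t \in tetsL ->
  let s := map toV t in
  [/\ rho_trc (ut s) = ut s,
      rho_edge (ut s) = ut s - ue s &
      forall W : chain, is_boundary (W *+ 3 - ue s) ->
        rho_trc W = W + ut s /\ rho_edge W = W].
Proof.
move=> Ht s.
have C1 : CT1 s by move: CT1_all; rewrite allzE => /allP /(_ t Ht).
have C2 : CT2 s by move: CT2_all; rewrite allzE => /allP /(_ t Ht).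
have C3 : CT3 s by move: CT3_all; rewrite allzE => /allP /(_ t Ht).
have C4 : CT4 s by move: CT4_all; rewrite allzE => /allP /(_ t Ht).
have C5 : CT5 s by move: CT5_all; rewrite allzE => /allP /(_ t Ht).
split; first exact: (L1 C1).
- exact: (L2 C5).
- by move=> W HW; split; [exact: (L3 C2 C3 HW) | exact: (L4 C4 HW)].
Qed.

Definition faceC (i : Face) (x : V) : bool := has (fun k : 'I_5 => fvT i k == x) (ordl 5).

Lemma face_setE i x : (x \in face_set i) = faceC i x.
Proof.
apply/imsetP/hasP => [[k _ ->]|[k _ /eqP <-]].
  by exists k; rewrite ?mem_ordl ?fvE.
by exists k; rewrite ?fvE.
Qed.

Definition cadjC (x y : V) : bool :=
  (x != y) && has (fun i : Face => faceC i x && faceC i y) (ordl 12).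

Lemma cube_adjE x y : cube_adj x y = cadjT x y.
Proof.
have -> : cube_adj x y = cadjC x y.
  rewrite /cube_adj /cadjC (exists_list _ (@mem_ordl 12)); congr andb.
  by apply: eqhas => i; rewrite !face_setE.
apply/eqP; apply: (all2V (P := fun x y => cadjC x y == cadjT x y)).
by vm_compute.
Qed.

Lemma allzP (T : eqType) (f : T -> bool) l x : allz f l -> x \in l -> f x.
Proof. by rewrite allzE => /allP; apply. Qed.

Definition q4 (a b c d : V) : bool :=
  hasz (fun t => perm_eq [:: a; b; c; d] (map toV t)) tetsL.
Definition nadj (a b : V) : bool := if veq a b then false else ~~ cadjT a b.

Lemma enum_check : allz (fun a => allz (fun b => if nadj a b then
   allz (fun c => if nadj a c then if nadj b c then
     allz (fun d => if nadj a d then if nadj b d then if nadj c d then q4 a b c d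
        else true else true else true) (ordl 20)
   else true else true) (ordl 20) else true) (ordl 20)) (ordl 20).
Proof. by vm_compute. Qed.

Lemma enum_q4 a b c d : nadj a b -> nadj a c -> nadj b c -> nadj a d -> nadj b d ->
  nadj c d -> q4 a b c d.
Proof.
move=> ab ac bc ad bd cd.
have H1 := allzP enum_check (mem_ordl a); cbv beta in H1.
have H2 := allzP H1 (mem_ordl b); cbv beta in H2; rewrite ab in H2.
have H3 := allzP H2 (mem_ordl c); cbv beta in H3; rewrite ac bc in H3.
have H4 := allzP H3 (mem_ordl d); cbv beta in H4; rewrite ad bd cd in H4.
exact: H4.
Qed.

Lemma nadjE a b : a != b -> ~~ cube_adj a b -> nadj a b.
Proof. by rewrite /nadj veqE cube_adjE => /negbTE ->. Qed.

Lemma is_boundary0 : is_boundary 0.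
Proof.
exists [ffun => 0]; rewrite big1 // => i _.
by rewrite ffunE mulr0z.
Qed.

Theorem theorem4p1 (e E : {set V}) :
  is_cube e -> is_tetra e E ->
  homologous (rho_trc (u_trc E)) (u_trc E) /\
  (forall W : chain, is_cycle W -> homologous (W *+ 3) (u_edge E) ->
     [/\ homologous (rho_trc W) (W + u_trc E),
         homologous (rho_edge W) W &
         homologous (rho_edge (u_trc E)) (u_trc E - W *+ 3)]).
Proof.
move=> _ /and3P [_ /eqP cE /forallP pw].
have pw2 : forall x y, x \in E -> y \in E -> ~~ cube_adj x y.
  move=> x y hx hy; move: (pw x); rewrite hx /= => /forallP /(_ y).
  by rewrite hy.
have sE : size (enum E) = 4%N by rewrite -cardE cE.
have uE := enum_uniq (mem E).
have mE : forall x, x \in enum E -> x \in E by move=> x; rewrite mem_enum.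
case Es: (enum E) sE uE mE => [|a [|b [|c [|d [|? ?]]]]] // _ uE mE.
have ha : a \in E by apply: mE; rewrite !inE eqxx.
have hb : b \in E by apply: mE; rewrite !inE eqxx ?orbT.
have hc : c \in E by apply: mE; rewrite !inE eqxx ?orbT.
have hd : d \in E by apply: mE; rewrite !inE eqxx ?orbT.
move: uE; rewrite /= !inE !negb_or => /andP [/and3P [ab ac ad] /andP [/andP [bc bd] /andP [cd _]]].
have := enum_q4 (nadjE ab (pw2 _ _ ha hb)) (nadjE ac (pw2 _ _ ha hc)) (nadjE bc (pw2 _ _ hb hc))
  (nadjE ad (pw2 _ _ ha hd)) (nadjE bd (pw2 _ _ hb hd)) (nadjE cd (pw2 _ _ hc hd)).
rewrite /q4 haszE => /hasP [t Ht hperm].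
have UT : u_trc E = ut (map toV t).
  by rewrite /u_trc -big_enum Es (perm_big _ hperm).
have UE : u_edge E = ue (map toV t).
  by rewrite /u_edge -big_enum Es (perm_big _ hperm).
rewrite UT UE.
have [R1 R2 R3] := main_t Ht.
split; first by rewrite /homologous R1 subrr; exact: is_boundary0.
move=> W _ HW; have [R4 R5] := R3 W HW.
split.
- by rewrite /homologous R4 subrr; exact: is_boundary0.
- by rewrite /homologous R5 subrr; exact: is_boundary0.
- rewrite /homologous R2.
  have -> : ut (map toV t) - ue (map toV t) - (ut (map toV t) - W *+ 3) = W *+ 3 - ue (map toV t).
    by rewrite opprB addrC addrA subrK.
  exact: HW.
Qed.
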